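(* Let $\omega:\Gamma\times\Gamma\to\Gamma$ be a group morphism. There is a subgroup $\Gamma_\omega\le\Gamma$ such that $\omega$ restricts to a surjective group morphism $\omega_{\mathrm{res}}:\Gamma_\omega\times\Gamma_\omega\to\Gamma_\omega$ and $G(\omega)\cong G(\omega_{\mathrm{res}})$.
   Context: $\{0,1\}^*$ denotes the finite words over $\{0,1\}$; $\mathfrak C=\{0,1\}^{\mathbb N}$. A finite complete prefix code is a finite set $\{t_1,\dots,t_n\}\subset\{0,1\}^*$ such that every $x\in\mathfrak C$ has exactly one $t_i$ as prefix. Thompson's group $V$ is the group of homeomorphisms $v$ of $\mathfrak C$ for which there exist finite complete prefix codes $\{t_i\},\{s_i\}$ and a permutation $\sigma$ with $v(t_iw)=s_{\sigma(i)}w$. For a group morphism $\omega:\Gamma^2\to\Gamma$, $K(\omega)$ is the group of maps $a:\{0,1\}^*\to\Gamma$ (pointwise product) with $a(u)=\omega(a(u0),a(u1))$ for all $u$; $V$ acts on it by $\pi(v)(a)(s_{\sigma(i)}u)=a(t_iu)$ for all $i$, $u$ (determining $\pi(v)(a)\in K(\omega)$ uniquely); $G(\omega):=K(\omega)\rtimes V$ with $vav^{-1}=\pi(v)(a)$. *)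

(* Defs.v *)
From HB Require Import structures.
From mathcomp Require Import all_boot all_fingroup.
From Stdlib Require Import ClassicalEpsilon ProofIrrelevance.

Set Implicit Arguments.
Unset Strict Implicit.
Unset Printing Implicit Defensive.

Record AbsGroup := MkGroup {
  gcar :> Type;
  gmul : gcar -> gcar -> gcar;
  ginv : gcar -> gcar;
  gone : gcar;
  gmulA : forall x y z, gmul x (gmul y z) = gmul (gmul x y) z;
  gmul1g : forall x, gmul gone x = x;
  gmulVg : forall x, gmul (ginv x) x = gone }.

Definition is_hom2 (Γ : AbsGroup) (ω : Γ * Γ -> Γ) : Prop :=
  forall x1 y1 x2 y2 : Γ,
    ω (gmul x1 x2, gmul y1 y2) = gmul (ω (x1, y1)) (ω (x2, y2)).

Record is_subgroup (Γ : AbsGroup) (S : Γ -> Prop) : Prop := {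
  sg1 : S (gone Γ);
  sgM : forall x y, S x -> S y -> S (gmul x y);
  sgV : forall x, S x -> S (ginv x) }.

Lemma sig_eq_pi (T : Type) (P : T -> Prop) (x y : {z | P z}) :
  proj1_sig x = proj1_sig y -> x = y.
Proof.
destruct x as [x px], y as [y py]; simpl; intros E; subst y.
f_equal; apply proof_irrelevance.
Qed.

Section SubGroup.
Variables (Γ : AbsGroup) (S : Γ -> Prop) (HS : is_subgroup S).

Definition sub_mul (x y : {z | S z}) : {z | S z} :=
  exist _ (gmul (proj1_sig x) (proj1_sig y)) (sgM HS (proj2_sig x) (proj2_sig y)).
Definition sub_inv (x : {z | S z}) : {z | S z} :=
  exist _ (ginv (proj1_sig x)) (sgV HS (proj2_sig x)).
Definition sub_one : {z | S z} := exist _ (gone Γ) (sg1 HS).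

Lemma sub_mulA x y z : sub_mul x (sub_mul y z) = sub_mul (sub_mul x y) z.
Proof. apply: sig_eq_pi; exact: gmulA. Qed.
Lemma sub_mul1g x : sub_mul sub_one x = x.
Proof. apply: sig_eq_pi; exact: gmul1g. Qed.
Lemma sub_mulVg x : sub_mul (sub_inv x) x = sub_one.
Proof. apply: sig_eq_pi; exact: gmulVg. Qed.

Definition sub_group : AbsGroup := MkGroup sub_mulA sub_mul1g sub_mulVg.
End SubGroup.

Definition restr (Γ : AbsGroup) (S : Γ -> Prop) (HS : is_subgroup S)
  (ω : Γ * Γ -> Γ) (Hcl : forall x y, S x -> S y -> S (ω (x, y))) :
  sub_group HS * sub_group HS -> sub_group HS :=
  fun p => exist S (ω (proj1_sig p.1, proj1_sig p.2))
                   (Hcl _ _ (proj2_sig p.1) (proj2_sig p.2)).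

Definition cantor := nat -> bool.       (* 0 = false, 1 = true *)
Definition word := seq bool.

Definition cat_inf (t : word) (x : cantor) : cantor :=
  fun k => if k < size t then nth false t k else x (k - size t).

Definition is_prefix (t : word) (x : cantor) : Prop :=
  forall k, k < size t -> x k = nth false t k.

Definition complete_prefix_code (n : nat) (t : 'I_n -> word) : Prop :=
  forall x : cantor, exists! i : 'I_n, is_prefix (t i) x.

Definition code_for (v : cantor -> cantor) (n : nat) (t s : 'I_n -> word)
  (σ : {perm 'I_n}) : Prop :=
  [/\ complete_prefix_code t, complete_prefix_code s &
      forall (i : 'I_n) (w : cantor), v (cat_inf (t i) w) = cat_inf (s (σ i)) w].

(* membership in Thompson's group V (such v is automatically a homeomorphism) *)
Definition inV (v : cantor -> cantor) : Prop :=
  exists n (t s : 'I_n -> word) (σ : {perm 'I_n}), code_for v t s σ.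

Definition inK (Γ : AbsGroup) (ω : Γ * Γ -> Γ) (a : word -> Γ) : Prop :=
  forall u : word, a u = ω (a (rcons u false), a (rcons u true)).

Definition pi_spec (Γ : AbsGroup) (ω : Γ * Γ -> Γ) (v : cantor -> cantor)
  (a b : word -> Γ) : Prop :=
  inK ω b /\
  exists n (t s : 'I_n -> word) (σ : {perm 'I_n}),
    code_for v t s σ /\ forall (i : 'I_n) (u : word), b (s (σ i) ++ u) = a (t i ++ u).

(* π(v)(a): the (unique, for v ∈ V and a ∈ K(ω)) b satisfying pi_spec *)
Definition pi (Γ : AbsGroup) (ω : Γ * Γ -> Γ) (v : cantor -> cantor) (a : word -> Γ)
  : word -> Γ :=
  epsilon (inhabits (fun _ : word => gone Γ)) (pi_spec ω v a).

Definition Gel (Γ : AbsGroup) : Type := ((word -> Γ) * (cantor -> cantor))%type.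

Definition inG (Γ : AbsGroup) (ω : Γ * Γ -> Γ) (x : Gel Γ) : Prop :=
  inK ω x.1 /\ inV x.2.

Definition Gmul (Γ : AbsGroup) (ω : Γ * Γ -> Γ) (x y : Gel Γ) : Gel Γ :=
  (fun u => gmul (x.1 u) (pi ω x.2 y.1 u), fun z => x.2 (y.2 z)).

Definition G_iso (Γ1 Γ2 : AbsGroup) (ω1 : Γ1 * Γ1 -> Γ1) (ω2 : Γ2 * Γ2 -> Γ2) : Prop :=
  exists φ : Gel Γ1 -> Gel Γ2,
    [/\ forall x, inG ω1 x -> inG ω2 (φ x),
        forall x y, inG ω1 x -> inG ω1 y -> φ x = φ y -> x = y,
        forall y, inG ω2 y -> exists2 x, inG ω1 x & φ x = y &
        forall x y, inG ω1 x -> inG ω1 y -> φ (Gmul ω1 x y) = Gmul ω2 (φ x) (φ y)].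

Arguments restr {Γ S} HS {ω} Hcl.

(* Main.v *)
Require Import Defs.
From mathcomp Require Import all_boot all_fingroup.
From mathcomp Require Import zify.
From Stdlib Require Import ClassicalEpsilon ProofIrrelevance FunctionalExtensionality.
Set Implicit Arguments.
Unset Strict Implicit.

Lemma cat_inf_cat (p r : word) w : cat_inf (p ++ r) w = cat_inf p (cat_inf r w).
Proof.
apply: functional_extensionality => k; rewrite /cat_inf size_cat nth_cat.
case: (ltnP k (size p)) => h1; first by have -> : k < size p + size r by lia.
case: (ltnP (k - size p) (size r)) => h2.
  by have -> : k < size p + size r by lia.
have -> : (k < size p + size r) = false by lia.
congr w; lia.
Qed.

Lemma prefix_cat (p r : word) w : is_prefix p (cat_inf (p ++ r) w).
Proof.
move=> k hk; rewrite /cat_inf size_cat nth_cat hk.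
by have -> : k < size p + size r by lia.
Qed.

Lemma prefix_decomp p x : is_prefix p x -> x = cat_inf p (fun k => x (k + size p)).
Proof.
move=> h; apply: functional_extensionality => k; rewrite /cat_inf.
case: ifP => hk; first exact: h.
by rewrite subnK //; lia.
Qed.

Lemma prefix_long (p u : word) w : is_prefix p (cat_inf u w) -> size p <= size u ->
  u = p ++ drop (size p) u.
Proof.
move=> h hs; apply: (@eq_from_nth _ false).
  rewrite size_cat size_drop; lia.
move=> k hk; rewrite nth_cat.
case: ifP => hkp.
  by move: (h k hkp); rewrite /cat_inf (leq_trans hkp hs).
by rewrite nth_drop subnKC //; lia.
Qed.

Lemma cat_inf_inj_lt (A B : word) : size A < size B ->
  ~ (forall x, cat_inf A x = cat_inf B x).
Proof.
move=> hs h.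
pose x := fun i : nat => i == 0.
have := congr1 (fun f => f (size B)) (h x).
rewrite /cat_inf ltnn.
have -> : (size B < size A) = false by lia.
rewrite subnn /x /=.
have -> : (size B - size A == 0) = false by lia.
done.
Qed.

Lemma cat_inf_inj (A B : word) : (forall x, cat_inf A x = cat_inf B x) -> A = B.
Proof.
move=> h.
case: (ltngtP (size A) (size B)) => hs.
- by case: (cat_inf_inj_lt hs).
- by case: (cat_inf_inj_lt hs) => x; rewrite h.
apply: (@eq_from_nth _ false) => // k hk.
have := congr1 (fun f => f k) (h (fun _ => false)).
by rewrite /cat_inf hk -hs hk.
Qed.

Lemma cat_inf_injr (p : word) w w' : cat_inf p w = cat_inf p w' -> w = w'.
Proof.
move=> h; apply: functional_extensionality => k.
have := congr1 (fun f => f (k + size p)) h.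
rewrite /cat_inf; have -> : (k + size p < size p) = false by lia.
by rewrite addnK.
Qed.

Lemma catI (p r r' : word) : p ++ r = p ++ r' -> r = r'.
Proof. by move=> h; have := congr1 (drop (size p)) h; rewrite !drop_size_cat. Qed.

Lemma code_uniq n (s : 'I_n -> word) (hs : complete_prefix_code s) i j x :
  is_prefix (s i) x -> is_prefix (s j) x -> i = j.
Proof.
move=> hi hj; case: (hs x) => k [_ hk].
by rewrite -(hk _ hi) -(hk _ hj).
Qed.

Lemma code_long n (s : 'I_n -> word) (hs : complete_prefix_code s) (u : word) :
  \max_i size (s i) <= size u -> exists j r, u = s j ++ r.
Proof.
move=> hu; case: (hs (cat_inf u (fun _ => false))) => j [hj _].
exists j, (drop (size (s j)) u); apply: prefix_long hj _.
exact: leq_trans (leq_bigmax j) hu.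
Qed.

Lemma code_split n (s : 'I_n -> word) (hs : complete_prefix_code s) i j r r' :
  s i ++ r = s j ++ r' -> i = j /\ r = r'.
Proof.
move=> e.
have ij : i = j.
  apply: (code_uniq hs (x := cat_inf (s i ++ r) (fun _ => false))).
    exact: prefix_cat.
  rewrite e; exact: prefix_cat.
by subst j; split => //; exact: catI e.
Qed.

Lemma code_inj v n (t s : 'I_n -> word) (σ : {perm 'I_n}) : code_for v t s σ ->
  forall y y', v y = v y' -> y = y'.
Proof.
case=> ht hs hv y y' e.
case: (ht y) => i [hi _]; case: (ht y') => k [hk _].
rewrite (prefix_decomp hi) (prefix_decomp hk) !hv in e *.
set w := (fun k0 => y (k0 + size (t i))) in e *.
set w' := (fun k0 => y' (k0 + size (t k))) in e *.
have eik : σ i = σ k.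
  apply: (code_uniq hs (x := cat_inf (s (σ i)) w)).
    move=> m hm; by rewrite /cat_inf hm.
  rewrite e => m hm; by rewrite /cat_inf hm.
have ik : i = k by apply: perm_inj eik.
subst k; by rewrite (cat_inf_injr e).
Qed.

Definition prefd n (s : 'I_n -> word) (u : word) := exists i r, u = s i ++ r.

Definition val0 (Γ : AbsGroup) (a : word -> Γ) n (t s : 'I_n -> word) (u : word) : Γ :=
  epsilon (inhabits (gone Γ)) (fun g => exists i r, u = s i ++ r /\ g = a (t i ++ r)).

Fixpoint bN (Γ : AbsGroup) (ω : Γ * Γ -> Γ) (a : word -> Γ) n (t s : 'I_n -> word)
   (N : nat) (u : word) : Γ :=
  match N with
  | 0 => val0 a t s u
  | N'.+1 => if excluded_middle_informative (prefd s u) then val0 a t s u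
             else ω (bN ω a t s N' (rcons u false), bN ω a t s N' (rcons u true))
  end.

Lemma val0E (Γ : AbsGroup) (a : word -> Γ) n (t s : 'I_n -> word)
  (hsplit : forall i j r r', s i ++ r = s j ++ r' -> i = j /\ r = r') i r :
  val0 a t s (s i ++ r) = a (t i ++ r).
Proof.
rewrite /val0; set P := (fun g => _).
have : exists g, P g by exists (a (t i ++ r)), i, r.
move=> /(epsilon_spec (inhabits (gone Γ))) [i' [r' [e ->]]].
by case: (hsplit _ _ _ _ e) => -> ->.
Qed.

Lemma bNS (Γ : AbsGroup) ω (a : word -> Γ) n (t s : 'I_n -> word) N u :
  bN ω a t s N.+1 u = if excluded_middle_informative (prefd s u) then val0 a t s u
             else ω (bN ω a t s N (rcons u false), bN ω a t s N (rcons u true)).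
Proof. by []. Qed.

Lemma bN_pref (Γ : AbsGroup) ω (a : word -> Γ) n (t s : 'I_n -> word) N u :
  prefd s u -> bN ω a t s N u = val0 a t s u.
Proof. by case: N => //= N h; case: excluded_middle_informative. Qed.

Lemma bN_stable (Γ : AbsGroup) ω (a : word -> Γ) n (t s : 'I_n -> word)
  (hlong : forall u, \max_i size (s i) <= size u -> prefd s u) N u :
  \max_i size (s i) <= N + size u -> bN ω a t s N.+1 u = bN ω a t s N u.
Proof.
elim: N u => [|N IH] u hu.
  by rewrite bN_pref //; apply: hlong.
rewrite [LHS]bNS [RHS]bNS.
case: excluded_middle_informative => [//|hn].
by rewrite !IH // size_rcons; lia.
Qed.

Lemma pi_exists (Γ : AbsGroup) (ω : Γ * Γ -> Γ) v (a : word -> Γ) :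
  inV v -> inK ω a -> exists b, Defs.pi_spec ω v a b.
Proof.
case=> n [t [s [σ hc]]] ha.
have hc' := hc; case: hc' => ht hs hv.
pose s' := fun i => s (σ i).
have hsplit : forall i j r r', s' i ++ r = s' j ++ r' -> i = j /\ r = r'.
  move=> i j r r' e; case: (code_split hs e) => /perm_inj -> -> //.
pose M := \max_i size (s i).
have hM : M = \max_i size (s' i).
  rewrite /M /s' (reindex_inj (@perm_inj _ σ)) //.
have hlong : forall u, \max_i size (s' i) <= size u -> prefd s' u.
  move=> u; rewrite -hM => /(code_long hs) [j [r ->]].
  exists (σ^-1 j)%g, r; by rewrite /s' permKV.
pose b := bN ω a t s' M.
exists b; split; last first.
  exists n, t, s, σ; split => // i u.
  rewrite /b bN_pref; first exact: (val0E a t hsplit i u).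
  by exists i, u.
move=> u.
case: (excluded_middle_informative (prefd s' u)) => hu.
  case: hu => i [r ->].
  rewrite /b !rcons_cat !bN_pref; try by exists i; eexists.
  by rewrite !(val0E a t hsplit) ha !rcons_cat.
have hMu : size u < M.
  rewrite ltnNge; apply/negP => h; apply: hu; apply: hlong; by rewrite -hM.
rewrite /b; case E : M hMu => [|M'] // _.
rewrite [LHS]/=; case: excluded_middle_informative => [//|hn].
rewrite !bN_stable //; rewrite -hM E size_rcons; lia.
Qed.

Lemma code_longσ n (s : 'I_n -> word) (σ : {perm 'I_n}) (hs : complete_prefix_code s) u :
  \max_i size (s i) <= size u -> exists i r, u = s (σ i) ++ r.
Proof.
move=> /(code_long hs) [j [r ->]]; exists (σ^-1 j)%g, r; by rewrite permKV.
Qed.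

Lemma v_word v n (t s : 'I_n -> word) (σ : {perm 'I_n}) (hc : code_for v t s σ) i r x :
  v (cat_inf (t i ++ r) x) = cat_inf (s (σ i) ++ r) x.
Proof. case: hc => _ _ hv; by rewrite !cat_inf_cat hv. Qed.

Lemma K_ext (Γ : AbsGroup) (ω : Γ * Γ -> Γ) b b' : inK ω b -> inK ω b' ->
  forall N u, (forall w : word, size w = N -> b (u ++ w) = b' (u ++ w)) -> b u = b' u.
Proof.
move=> hb hb'; elim=> [|N IH] u h.
  by have := h [::] erefl; rewrite cats0.
rewrite hb hb'; congr ω; congr pair; apply: IH => w hw; rewrite cat_rcons; apply: h;
  by rewrite /= hw.
Qed.

Lemma pi_unique (Γ : AbsGroup) (ω : Γ * Γ -> Γ) v (a : word -> Γ) b b' :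
  Defs.pi_spec ω v a b -> Defs.pi_spec ω v a b' -> b = b'.
Proof.
case=> hb [n [t [s [σ [hc hbs]]]]]; case=> hb' [n' [t' [s' [σ' [hc' hbs']]]]].
have hc0 := hc; case: hc0 => ht hs _.
have hc0' := hc'; case: hc0' => ht' hs' _.
pose M := maxn (\max_i size (s i)) (\max_i size (s' i)).
have key : forall z, M <= size z -> b z = b' z.
  move=> z hz.
  have [i [r ez]] := code_longσ σ hs (leq_trans (leq_maxl _ _) hz).
  have [k [r' ez']] := code_longσ σ' hs' (leq_trans (leq_maxr _ _) hz).
  rewrite {1}ez hbs ez' hbs'; congr a.
  apply: cat_inf_inj => x; apply: (code_inj hc).
  by rewrite (v_word hc) (v_word hc') -ez -ez'.
apply: functional_extensionality => u.
apply: (K_ext hb hb' (N := M)) => w hw; apply: key; rewrite size_cat hw; exact: leq_addl.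
Qed.


Lemma mulgV' (Γ : AbsGroup) (x : Γ) : gmul x (ginv x) = gone Γ.
Proof.
rewrite -{1}(gmul1g (gmul x (ginv x))) -{1}(gmulVg (ginv x)) -gmulA.
by rewrite (gmulA (ginv x) x) gmulVg gmul1g gmulVg.
Qed.

Lemma mulg1' (Γ : AbsGroup) (x : Γ) : gmul x (gone Γ) = x.
Proof. by rewrite -(gmulVg x) gmulA mulgV' gmul1g. Qed.

Lemma inv_uniq (Γ : AbsGroup) (p q : Γ) : gmul p q = gone Γ -> p = ginv q.
Proof. by move=> h; rewrite -[p]mulg1' -(mulgV' q) gmulA h gmul1g. Qed.

Lemma hom1 (Γ : AbsGroup) (ω : Γ * Γ -> Γ) : is_hom2 ω -> ω (gone Γ, gone Γ) = gone Γ.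
Proof.
move=> h; set e := ω _.
have he : e = gmul e e by rewrite /e -h gmul1g.
have := congr1 (gmul (ginv e)) he.
by rewrite gmulA gmulVg gmul1g => <-.
Qed.

Lemma homV (Γ : AbsGroup) (ω : Γ * Γ -> Γ) x y : is_hom2 ω ->
  ω (ginv x, ginv y) = ginv (ω (x, y)).
Proof. move=> h; apply: inv_uniq; by rewrite -h !gmulVg hom1. Qed.

Definition Sω (Γ : AbsGroup) (ω : Γ * Γ -> Γ) (g : Γ) : Prop :=
  exists a, inK ω a /\ a [::] = g.

Lemma Sω_shift (Γ : AbsGroup) (ω : Γ * Γ -> Γ) a u : inK ω a -> Sω ω (a u).
Proof.
move=> ha; exists (fun w => a (u ++ w)); split; last by rewrite cats0.
by move=> w; rewrite ha !rcons_cat.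
Qed.

Definition lift (Γ : AbsGroup) (S : Γ -> Prop) (HS : is_subgroup S) (f : word -> Γ)
  : word -> sub_group HS :=
  fun u => match excluded_middle_informative (S (f u)) with
           | left p => exist S (f u) p
           | right _ => sub_one HS end.

Lemma liftE (Γ : AbsGroup) (S : Γ -> Prop) (HS : is_subgroup S) f u :
  S (f u) -> proj1_sig (lift HS f u) = f u.
Proof. by rewrite /lift; case: excluded_middle_informative. Qed.

Lemma pi_specP (Γ : AbsGroup) (ω : Γ * Γ -> Γ) v a : inV v -> inK ω a ->
  Defs.pi_spec ω v a (Defs.pi ω v a).
Proof. move=> hv ha; rewrite /Defs.pi; apply: epsilon_spec; exact: pi_exists. Qed.

Unset Implicit Arguments.
Theorem mainTheorem16 (Γ : Defs.AbsGroup) (ω : Γ * Γ -> Γ) (Hω : is_hom2 ω) :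
  exists (S : Γ -> Prop) (HS : is_subgroup S)
         (Hcl : forall x y : Γ, S x -> S y -> S (ω (x, y))),
    [/\ is_hom2 (restr HS Hcl),
        (forall z : sub_group HS, exists p, restr HS Hcl p = z) &
        G_iso ω (restr HS Hcl)].
Proof.
have HS : is_subgroup (Sω ω).
  split.
  - exists (fun _ => gone Γ); split => // u; by rewrite hom1.
  - move=> x y [a [ha <-]] [b [hb <-]].
    exists (fun u => gmul (a u) (b u)); split => // u; by rewrite Hω -ha -hb.
  - move=> x [a [ha <-]]; exists (fun u => ginv (a u)); split => // u.
    by rewrite homV // -ha.
have Hcl : forall x y : Γ, Sω ω x -> Sω ω y -> Sω ω (ω (x, y)).
  move=> x y [a [ha <-]] [b [hb <-]].
  exists (fun u => match u with [::] => ω (a [::], b [::])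
                   | false :: w => a w | true :: w => b w end); split => //.
  by case=> [|[] w] //=; rewrite ?ha ?hb.
exists (Sω ω), HS, Hcl; split.
- move=> x1 y1 x2 y2; apply: sig_eq_pi; exact: Hω.
- move=> [g [a [ha ea]]].
  exists (exist _ (a [:: false]) (Sω_shift [:: false] ha),
          exist _ (a [:: true]) (Sω_shift [:: true] ha)).
  apply: sig_eq_pi => /=; by rewrite -ea (ha [::]).
have liftK : forall a, inK ω a -> inK (restr HS Hcl) (lift HS a).
  move=> a ha u; apply: sig_eq_pi => /=.
  by rewrite !liftE; try exact: Sω_shift; exact: ha.
have transfer : forall v b c, inK ω b ->
    Defs.pi_spec (restr HS Hcl) v (lift HS b) c ->
    Defs.pi_spec ω v b (fun u => proj1_sig (c u)).
  move=> v b c hb [hc [n [t [s [σ [hco he]]]]]]; split.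
    by move=> u; rewrite {1}(hc u).
  exists n, t, s, σ; split => // i u.
  by rewrite he liftE //; exact: Sω_shift.
exists (fun x => (lift HS x.1, x.2)); split.
- move=> [a v] [ha hv]; split => //=; exact: liftK.
- move=> [a v] [a' v'] [/= ha hv] [/= ha' hv'] [e1 e2] /=; congr pair => //.
  apply: functional_extensionality => u.
  by rewrite -(liftE HS (Sω_shift u ha)) -(liftE HS (Sω_shift u ha')) e1.
- move=> [c v] [/= hc hv].
  have hK : inK ω (fun u => proj1_sig (c u)).
    by move=> u; rewrite {1}(hc u).
  exists (fun u => proj1_sig (c u), v) => //=.
  congr pair; apply: functional_extensionality => u; apply: sig_eq_pi.
  rewrite liftE //; exact: proj2_sig.
- move=> [a v] [b w] [/= ha hv] [/= hb hw] /=; congr pair.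
  apply: functional_extensionality => u; apply: sig_eq_pi => /=.
  have hpi := pi_specP hv hb.
  have hpi' := pi_specP hv (liftK _ hb).
  have E := pi_unique hpi (transfer _ _ _ hb hpi').
  rewrite liftE; last first.
    apply: (sgM HS); first exact: Sω_shift.
    by case: hpi => hk _; exact: Sω_shift.
  rewrite liftE; last exact: Sω_shift.
  by rewrite E.
Qed.
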